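(* Suppose $a=1$ (so the actual beliefs are updated by the min-protocol at every time step) and conditions (i)–(iii) hold: (i) for every pair of distinct hypotheses $\theta_p,\theta_q$, $\mathcal{S}(\theta_p,\theta_q)\neq\emptyset$; (ii) $\mathcal{G}$ is strongly connected; (iii) $\pi_{i,0}(\theta)>0,\mu_{i,0}(\theta)>0$ for all $i,\theta$. Then for every $i\in\mathcal{V}$, $\mu_{i,t}(\theta^\star)\to1$ a.s., and for every $i\in\mathcal{V}$ and every $\theta\in\Theta\setminus\{\theta^\star\}$, $$\liminf_{t\to\infty}-\frac{\log\mu_{i,t}(\theta)}{t}\ \ge\ \max_{v\in\mathcal{S}(\theta^\star,\theta)}K_v(\theta^\star,\theta)\quad\text{a.s.}$$
   Context: Agents $\mathcal{V}=\{1,\dots,n\}$ interact over a directed graph $\mathcal{G}=(\mathcal{V},\mathcal{E})$; $(j,i)\in\mathcal{E}$ means $j$ can send information to $i$, and $\mathcal{N}_i=\{j:(j,i)\in\mathcal{E}\}$. $\Theta=\{\theta_1,\dots,\theta_m\}$ is a finite set of hypotheses, $\theta^\star\in\Theta$ the fixed true state. Each agent $i$ has a finite signal space $\mathcal{S}_i$ and known marginal likelihoods $l_i(\cdot|\theta)$ of a joint likelihood $l(\cdot|\theta)$ on $\mathcal{S}_1\times\cdots\times\mathcal{S}_n$, with $l_i(w_i|\theta)>0$ for all $w_i,\theta$. Signal profiles $s_t$, $t\in\mathbb{N}_+$, are i.i.d. over time with law $l(\cdot|\theta^\star)$ (possibly correlated across agents); agent $i$ sees $s_{i,t}$. ''a.s.''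 refers to the product measure $\mathbb{P}^{\theta^\star}$ on sequences of profiles. $K_i(\theta_p,\theta_q)=D(l_i(\cdot|\theta_p)\|l_i(\cdot|\theta_q))$ (KL divergence); $\mathcal{S}(\theta_p,\theta_q)=\{i:K_i(\theta_p,\theta_q)>0\}$. Rule with $a=1$: for all $t\in\mathbb{N}$, $\pi_{i,t+1}(\theta)=\dfrac{l_i(s_{i,t+1}|\theta)\pi_{i,t}(\theta)}{\sum_{p}l_i(s_{i,t+1}|\theta_p)\pi_{i,t}(\theta_p)}$ and $\mu_{i,t+1}(\theta)=\dfrac{\min\{\{\mu_{j,t}(\theta)\}_{j\in\mathcal{N}_i},\pi_{i,t+1}(\theta)\}}{\sum_{p}\min\{\{\mu_{j,t}(\theta_p)\}_{j\in\mathcal{N}_i},\pi_{i,t+1}(\theta_p)\}}$, with initial probability vectors $\boldsymbol\pi_{i,0},\boldsymbol\mu_{i,0}$. *)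

(* Defs.v *)
From HB Require Import structures.
From mathcomp Require Import all_boot all_order all_algebra.
From mathcomp Require Import all_classical all_reals all_analysis.
Set Implicit Arguments. Unset Strict Implicit. Unset Printing Implicit Defensive.
Import Order.TTheory GRing.Theory Num.Theory.
Local Open Scope ring_scope.

Section Model.
Variables (R : realType) (n m : nat) (S : 'I_n -> finType).

Definition profile := {dffun forall i : 'I_n, S i}.

(* joint likelihood l(. | theta), indexed by hypotheses theta : 'I_m *)
Variable l : 'I_m -> profile -> R.

Definition lmarg (i : 'I_n) (th : 'I_m) (a : S i) : R :=
  \sum_(w : profile | w i == a) l th w.
Arguments lmarg : clear implicits.


Definition KL (i : 'I_n) (p q : 'I_m) : R :=
  \sum_(a : S i) lmarg i p a * ln (lmarg i p a / lmarg i q a).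

(* S(theta_p, theta_q) as a predicate on agents *)
Definition informative (p q : 'I_m) (i : 'I_n) : bool := 0 < KL i p q.

Variables (E : rel 'I_n) (* E j i  <->  (j,i) is an edge: j sends to i *)
          (pi0 mu0 : 'I_n -> 'I_m -> R).

(* One step of the rule with a = 1, driven by the new profile w = s_{t+1}. *)
Definition pi_step (w : profile) (pi : 'I_n -> 'I_m -> R) i th : R :=
  lmarg i th (w i) * pi i th / \sum_(p < m) lmarg i p (w i) * pi i p.

Definition min_nb (mu pi' : 'I_n -> 'I_m -> R) i th : R :=
  \big[Order.min/pi' i th]_(j | E j i) mu j th.

Definition mu_step (mu pi' : 'I_n -> 'I_m -> R) i th : R :=
  min_nb mu pi' i th / \sum_(p < m) min_nb mu pi' i p.

(* beliefs (pi_t, mu_t) given the signal sequence; s k is the profile s_{k+1} *)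
Fixpoint beliefs (s : nat -> profile) (t : nat)
  : ('I_n -> 'I_m -> R) * ('I_n -> 'I_m -> R) :=
  match t with
  | 0 => (pi0, mu0)
  | t'.+1 =>
      let pm := beliefs s t' in
      let pi' := pi_step (s t') pm.1 in
      (pi', mu_step pm.2 pi')
  end.

Definition pi_b s t := (beliefs s t).1.
Definition mu_b s t := (beliefs s t).2.

End Model.
Arguments lmarg {R n m S} l i th a.

(* Main.v *)
Require Import Defs.
From HB Require Import structures.
From mathcomp Require Import all_boot all_order all_algebra.
From mathcomp Require Import all_classical all_reals all_analysis.
From mathcomp Require Import ring lra zify.
Import Order.TTheory GRing.Theory Num.Theory.
Import numFieldNormedType.Exports.
Set Implicit Arguments. Unset Strict Implicit. Unset Printing Implicit Defensive.
Local Open Scope ring_scope.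
Local Open Scope classical_set_scope.

Section Prob.
Variables (R : realType) (d : measure_display) (Omega : measurableType d)
  (P : probability Omega R) (T : finType) (X : nat -> Omega -> T) (law : T -> R).
Hypotheses (law_ge0 : forall w, 0 <= law w)
  (law_sum1 : \sum_w law w = 1)
  (X_meas : forall k w, measurable [set om | X k om = w])
  (X_iid : forall (N : nat) (ws : nat -> T),
      P [set om | forall k, (k < N)%N -> X k om = ws k]
      = (\prod_(k < N) law (ws k))%:E).

Lemma mu_bigU (I : eqType) (r : seq I) (F : I -> set Omega) :
  uniq r -> (forall i, measurable (F i)) ->
  (forall i j, i != j -> F i `&` F j = set0) ->
  P (\big[setU/set0]_(i <- r) F i) = (\sum_(i <- r) P (F i))%E.
Proof.
move=> + Fm Fd; elim: r => [|i r IH]; first by rewrite !big_nil measure0.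
rewrite /= => /andP[ir ur]; rewrite !big_cons (measureU P (Fm i))//.
- by congr (_ + _)%E; exact: (IH ur).
- by apply: bigsetU_measurable => j _.
- apply/seteqP; split => // x [Fix]; elim: (r) ir {IH ur} => [|j r' IHr]; first by rewrite big_nil.
  rewrite in_cons negb_or big_cons => /andP[ij ir'] [Fjx|]; last exact: IHr.
  by have := Fd _ _ ij; move/seteqP => [+ _] => /(_ x (conj Fix Fjx)).
Qed.

Lemma in_bigU (I : eqType) (r : seq I) (F : I -> set Omega) x :
  (\big[setU/set0]_(i <- r) F i) x <-> exists2 i, i \in r & F i x.
Proof.
elim: r => [|i r IH]; first by rewrite big_nil; split => // -[].
rewrite big_cons; split.
- case=> [Fx|/IH[j jr Fjx]]; first by exists i; rewrite ?mem_head.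
  by exists j; rewrite // in_cons jr orbT.
- case=> j; rewrite in_cons => /orP[/eqP->|jr Fjx]; first by left.
  by right; apply/IH; exists j.
Qed.

Variable w0 : T.
Definition ffX k (om : Omega) : {ffun 'I_k -> T} := [ffun i : 'I_k => X i om].
Definition extg k (g : {ffun 'I_k -> T}) (r : nat) : T :=
  if insub r is Some i then g i else w0.

Lemma cyl_eq k (g : {ffun 'I_k -> T}) :
  [set om | ffX k om = g] = [set om | forall r, (r < k)%N -> X r om = extg g r].
Proof.
apply/seteqP; split => om /=.
- move=> <- r rk; rewrite /extg insubT /= ffunE //.
- move=> H; apply/ffunP => i; rewrite ffunE H // /extg valK //.
Qed.

Lemma P_cyl k g : P [set om | ffX k om = g] = (\prod_(i < k) law (g i))%:E.
Proof.
rewrite cyl_eq X_iid; congr (_%:E); apply: eq_bigr => i _.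
by rewrite /extg valK.
Qed.

Lemma cyl_meas k g : measurable [set om | ffX k om = g].
Proof.
rewrite cyl_eq.
have -> : [set om | forall r, (r < k)%N -> X r om = extg g r] =
  \bigcap_r [set om | (r < k)%N -> X r om = extg g r].
  by apply/seteqP; split => om /= H r; [move=> _|]; apply: H.
apply: bigcapT_measurable => r; case: (ltnP r k) => rk.
- suff -> : [set om | true -> X r om = extg g r] = [set om | X r om = extg g r] by [].
  by apply/seteqP; split => om /=; [apply|move=> ? _].
- suff -> : [set om | false -> X r om = extg g r] = setT by [].
  by apply/seteqP; split => om.
Qed.

Lemma P_event k (F : pred {ffun 'I_k -> T}) :
  P [set om | F (ffX k om)] = (\sum_(g | F g) \prod_(i < k) law (g i))%:E.
Proof.
have -> : [set om | F (ffX k om)] =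
  \big[setU/set0]_(g <- [seq g <- enum {ffun 'I_k -> T} | F g]) [set om | ffX k om = g].
  apply/seteqP; split => om /=.
  - by move=> Fom; apply/in_bigU; exists (ffX k om) => //; rewrite mem_filter Fom mem_enum.
  - by move/in_bigU => [g]; rewrite mem_filter => /andP[Fg _] /= ->.
rewrite mu_bigU.
- rewrite -sumEFin big_filter /= enumT; apply: eq_bigr => g _; exact: P_cyl.
- by apply: filter_uniq; apply: enum_uniq.
- exact: cyl_meas.
- move=> g h gh; apply/seteqP; split => om //= [-> hom]; by rewrite hom eqxx in gh.
Qed.

Lemma event_meas k (F : pred {ffun 'I_k -> T}) : measurable [set om | F (ffX k om)].
Proof.
have -> : [set om | F (ffX k om)] =
  \big[setU/set0]_(g <- [seq g <- enum {ffun 'I_k -> T} | F g]) [set om | ffX k om = g].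
  apply/seteqP; split => om /=.
  - by move=> Fom; apply/in_bigU; exists (ffX k om) => //; rewrite mem_filter Fom mem_enum.
  - by move/in_bigU => [g]; rewrite mem_filter => /andP[Fg _] /= ->.
by apply: bigsetU_measurable => g _; exact: cyl_meas.
Qed.


Definition cnt (f : pred T) k om : R := \sum_(i < k) (f (X i om))%:R.
Definition qf (f : pred T) : R := \sum_(w | f w) law w.

Lemma qf_ge0 f : 0 <= qf f.
Proof. by apply: sumr_ge0 => w _. Qed.

Lemma qfC f : qf (predC f) = 1 - qf f.
Proof.
by rewrite -law_sum1 (bigID f predT) /= addrC addrK /qf; apply: eq_bigl => w.
Qed.

Lemma qf_le1 f : qf f <= 1.
Proof. have := qf_ge0 (predC f); rewrite qfC; lra. Qed.

Lemma cnt_ffX f k om : cnt f k om = \sum_(i < k) (f (ffX k om i))%:R.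
Proof. by apply: eq_bigr => i _; rewrite ffunE. Qed.

Lemma chernoff (f : pred T) (eps : R) : 0 < eps <= 1 -> exists2 rho : R, 0 <= rho < 1 &
  forall k, (P [set om | (k%:R * (qf f + eps) <= cnt f k om)%R] <= (rho ^+ k)%:E)%E.
Proof.
move=> /andP[eps0 eps1].
set lam := eps / 4; set c := qf f + eps.
set M := \sum_w law w * expR (lam * (f w)%:R).
set Ec := expR (lam * c).
have Ec0 : 0 < Ec by apply: expR_gt0.
have M0 : 0 <= M by apply: sumr_ge0 => w _; rewrite mulr_ge0 ?expR_ge0.
have ME : M = qf f * expR lam + (1 - qf f).
  rewrite -qfC /M (bigID f predT) /= mulr_suml; congr (_ + _); apply: eq_bigr => w.
    by move=> ->; rewrite mulr1.
  by move=> /negbTE ->; rewrite mulr0 expR0 mulr1.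
have MEc : M < Ec.
  have h1 := expR_ge1Dx (lam * c).
  have h2 := expR_ge1Dx lam.
  have h3 := expR_ge1Dx (- lam).
  have E0 := expR_gt0 lam.
  rewrite expRN in h3.
  have h4 : expR lam * (1 - lam) <= 1.
    by move: h3; rewrite -(ler_pM2l E0) mulfV ?gt_eqF.
  have q0 := qf_ge0 f; have q1 := qf_le1 f.
  rewrite ME (lt_le_trans _ h1) // /c /lam.
  set E := expR _ in h2 h4 E0 *; set q := qf f in q0 q1 *.
  have a : E - 1 <= eps / 4 * E by rewrite /lam in h4; lra.
  have b : E <= 4 / 3 by rewrite /lam in h4; nra.
  have e : q * (E - 1 - eps / 4) <= E - 1 - eps / 4 by rewrite /lam in h2; nra.
  have g : E - 1 - eps / 4 <= eps / 4 * (eps / 4 * E) by nra.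
  nra.
exists (M / Ec).
  apply/andP; split; first by rewrite divr_ge0 // ltW.
  by rewrite ltr_pdivrMr // mul1r.
move=> k.
pose Fk := fun g : {ffun 'I_k -> T} => k%:R * c <= \sum_(i < k) (f (g i))%:R.
have -> : [set om | k%:R * c <= cnt f k om] = [set om | Fk (ffX k om)].
  by apply/seteqP; split => om /=; rewrite /Fk cnt_ffX.
rewrite P_event lee_fin.
apply: (@le_trans _ _ (\sum_(g : {ffun 'I_k -> T}) (\prod_(i < k) (law (g i) * expR (lam * (f (g i))%:R))) / Ec ^+ k)).
  rewrite [leRHS](bigID Fk) /= -[leLHS]addr0; apply: lerD; last first.
    by apply: sumr_ge0 => g _; apply: divr_ge0; [apply: prodr_ge0 => i _; rewrite mulr_ge0 ?expR_ge0 | rewrite exprn_ge0 // ltW].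
  apply: ler_sum => g Fg.
  rewrite big_split /= -mulrA ler_peMr //; first by apply: prodr_ge0.
  rewrite ler_pdivlMr ?exprn_gt0 // mul1r -expR_sum -expRM_natl ler_expR /Ec.
  rewrite -mulr_sumr mulrCA ler_pM2l; last by rewrite /lam divr_gt0.
  exact: Fg.
rewrite -mulr_suml -(bigA_distr_bigA (fun (i : 'I_k) (w : T) => law w * expR (lam * (f w)%:R))).
rewrite prodr_const card_ord exprMn exprVn.
by rewrite /M.
Qed.


Lemma geom_bound (rho : R) K N : 0 <= rho < 1 ->
  \sum_(0 <= n < N) rho ^+ (n + K) <= rho ^+ K / (1 - rho).
Proof.
move=> /andP[r0 r1].
have HS : (1 - rho) * \sum_(0 <= n < N) rho ^+ n = 1 - rho ^+ N.
  elim: N => [|N IH]; first by rewrite big_geq // mulr0 expr0 subrr.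
  by rewrite big_nat_recr //= mulrDr IH exprS; ring.
have -> : \sum_(0 <= n < N) rho ^+ (n + K) = rho ^+ K * \sum_(0 <= n < N) rho ^+ n.
  by rewrite mulr_sumr; apply: eq_bigr => n _; rewrite exprD mulrC.
rewrite ler_pdivlMr ?subr_gt0 // -mulrA [_ * (1 - rho)]mulrC HS.
rewrite ler_piMr ?exprn_ge0 // lerBlDr lerDl exprn_ge0 //.
Qed.

Lemma borel_cantelli (A : nat -> set Omega) (rho : R) :
  (forall k, measurable (A k)) -> 0 <= rho < 1 ->
  (forall k, (P (A k) <= (rho ^+ k)%:E)%E) ->
  P.-negligible [set om | forall K, exists2 k, (K <= k)%N & A k om].
Proof.
move=> Am rho01 PA.
have /andP[r0 r1] := rho01.
set B := \bigcap_K \bigcup_j A (j + K)%N.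
have Bm : measurable B.
  by apply: bigcapT_measurable => K; apply: bigcupT_measurable => j.
exists B; split => //; last first.
  move=> om /= H K _; have [k Kk Ak] := H K; exists (k - K)%N => //.
  by rewrite subnK.
have PBK K : (P B <= (rho ^+ K / (1 - rho))%:E)%E.
  apply: (@le_trans _ _ (P (\bigcup_j A (j + K)%N))).
    apply: le_measure; rewrite ?inE //; last by move=> om /(_ K I).
    by apply: bigcupT_measurable.
  apply: le_trans (@measure_sigma_subadditive _ _ _ P (\bigcup_j A (j + K)%N) (fun j => A (j + K)%N) _ _ _) _.
  - by move=> j; apply: Am.
  - by apply: bigcupT_measurable.
  - by [].
  apply: lime_le; first by apply: is_cvg_nneseries => n _ _.
  apply: nearW => N.
  apply: (@le_trans _ _ (\sum_(0 <= n < N) ((rho ^+ (n + K))%:E))%E).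
    by apply: lee_sum => n _; apply: PA.
  by rewrite sumEFin lee_fin geom_bound.
apply/eqP; rewrite eq_le measure_ge0 andbT.
apply/lee_addgt0Pr => e e0; rewrite add0e.
have : (fun K => rho ^+ K) @ \oo --> (0 : R).
  by apply: cvg_expr; rewrite ger0_norm.
move/cvgrPdist_lt => /(_ (e * (1 - rho))) [].
  by rewrite mulr_gt0 // subr_gt0.
move=> K _ /(_ K (leqnn K)) /=; rewrite sub0r normrN ger0_norm ?exprn_ge0 // => HK.
apply: le_trans (PBK K) _; rewrite lee_fin ler_pdivrMr ?subr_gt0 //.
exact: ltW.
Qed.


Lemma tail_negl (f : pred T) (eps : R) : 0 < eps <= 1 ->
  P.-negligible [set om | forall K, exists2 k, (K <= k)%N &
     (k%:R * (qf f + eps) <= cnt f k om)%R].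
Proof.
move=> /(chernoff f) [rho rho01 Hrho].
apply: (borel_cantelli _ rho01 Hrho).
move=> k.
pose Fk := fun g : {ffun 'I_k -> T} => k%:R * (qf f + eps) <= \sum_(i < k) (f (g i))%:R.
have -> : [set om | (k%:R * (qf f + eps) <= cnt f k om)%R] = [set om | Fk (ffX k om)].
  by apply/seteqP; split => om /=; rewrite /Fk cnt_ffX.
exact: event_meas.
Qed.

Lemma cntC f k om : cnt (predC f) k om = k%:R - cnt f k om.
Proof.
have -> : k%:R = \sum_(i < k) (1 : R) by rewrite sumr_const card_ord.
rewrite /cnt -sumrB; apply: eq_bigr => i _ /=.
by case: (f _); rewrite ?subrr ?subr0.
Qed.

Lemma slln (f : pred T) : {ae P, forall om, forall eps : R, 0 < eps ->
  exists K, forall k, (K <= k)%N -> `|cnt f k om - k%:R * qf f| <= k%:R * eps}.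
Proof.
pose e (N : nat) : R := (N.+1%:R)^-1.
have e01 N : 0 < e N <= 1.
  by rewrite /e invr_gt0 ltr0n /= invf_le1 ?ltr0n // ler1n.
pose U N := [set om | forall K, exists2 k, (K <= k)%N &
     (k%:R * (qf f + e N) <= cnt f k om)%R].
pose L N := [set om | forall K, exists2 k, (K <= k)%N &
     (k%:R * (qf (predC f) + e N) <= cnt (predC f) k om)%R].
have Bneg : P.-negligible (\bigcup_N (U N `|` L N)).
  apply: negligible_bigcup => N; apply: negligibleU; exact: tail_negl.
change (P.-negligible (~` [set om | forall eps : R, 0 < eps ->
  exists K, forall k, (K <= k)%N -> `|cnt f k om - k%:R * qf f| <= k%:R * eps])).
apply: negligibleS Bneg => om /= Hom.
apply: contrapT => HB; apply: Hom => eps eps0.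
have [N HN] : exists N, e N <= eps.
  exists (Num.truncn (eps^-1)); rewrite /e -[leRHS]invrK lef_pV2 ?posrE ?invr_gt0 ?ltr0n //.
  exact: ltW (truncnS_gt _).
have nU : ~ U N om by move=> H; apply: HB; exists N => //; left.
have nL : ~ L N om by move=> H; apply: HB; exists N => //; right.
have [K1 HK1] : exists K, forall k, (K <= k)%N -> cnt f k om < k%:R * (qf f + e N).
  apply: contrapT => H; apply: nU => K; apply: contrapT => H'; apply: H; exists K => k Kk.
  by rewrite ltNge; apply/negP => Hk; apply: H'; exists k.
have [K2 HK2] : exists K, forall k, (K <= k)%N -> cnt (predC f) k om < k%:R * (qf (predC f) + e N).
  apply: contrapT => H; apply: nL => K; apply: contrapT => H'; apply: H; exists K => k Kk.
  by rewrite ltNge; apply/negP => Hk; apply: H'; exists k.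
exists (maxn K1 K2) => k Kk.
have h1 := HK1 k (leq_trans (leq_maxl _ _) Kk).
have h2 := HK2 k (leq_trans (leq_maxr _ _) Kk).
rewrite cntC qfC in h2.
have k0 : 0 <= k%:R :> R by [].
have : k%:R * e N <= k%:R * eps by rewrite ler_wpM2l.
rewrite ler_norml; move: h1 h2; set c := cnt f k om; set q := qf f; set x := k%:R.
move=> h1 h2 h3; apply/andP; split; nra.
Qed.

End Prob.

Lemma sum_gt0 (R : realDomainType) (I : finType) (F : I -> R) j :
  (forall i, 0 <= F i) -> 0 < F j -> 0 < \sum_i F i.
Proof.
move=> F0 Fj; rewrite (bigD1 j) //=.
have : 0 <= \sum_(i | i != j) F i by apply: sumr_ge0 => i _.
move: Fj; set a := F j; set b := \sum_(i | _) _; lra.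
Qed.

Lemma ev_lb (R : realDomainType) (u : nat -> R) N : forall c0, 0 < c0 ->
  (forall t, (N <= t)%N -> c0 <= u t) -> (forall t, 0 < u t) ->
  exists2 c, 0 < c & forall t, c <= u t.
Proof.
elim: N => [|N IH] c0 c00 Hc Hu; first by exists c0 => // t; apply: Hc.
apply: (IH (Num.min c0 (u N))) => //; first by rewrite lt_min c00 Hu.
move=> t; rewrite leq_eqVlt => /orP[/eqP <-|Nt]; first by rewrite ge_min lexx orbT.
by rewrite ge_min Hc.
Qed.

Section BigMin.
Variables (R : realDomainType) (I : eqType) (r : seq I) (P : pred I) (F : I -> R) (x : R).

Lemma bigmin_le_init : \big[Order.min/x]_(j <- r | P j) F j <= x.
Proof. by elim/big_rec: _ => // i y _ Hy; rewrite ge_min Hy orbT. Qed.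

Lemma bigmin_le j : j \in r -> P j -> \big[Order.min/x]_(j <- r | P j) F j <= F j.
Proof.
elim: r => [//|i r' IH]; rewrite in_cons big_cons => /orP[/eqP <- ->|jr Pj].
  by rewrite ge_min lexx.
by case: ifP => _; [rewrite ge_min IH ?orbT|apply: IH].
Qed.

Lemma le_bigmin c : c <= x -> (forall j, P j -> c <= F j) ->
  c <= \big[Order.min/x]_(j <- r | P j) F j.
Proof. by move=> cx cF; elim/big_ind: _ => // a b ca cb; rewrite le_min ca cb. Qed.

Lemma lt_bigmin c : c < x -> (forall j, P j -> c < F j) ->
  c < \big[Order.min/x]_(j <- r | P j) F j.
Proof. by move=> cx cF; elim/big_ind: _ => // a b ca cb; rewrite lt_min ca cb. Qed.
End BigMin.

Section Det.
Variables (R : realType) (n m : nat) (S : 'I_n -> finType)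
  (l : 'I_m -> profile S -> R) (thstar : 'I_m)
  (E : rel 'I_n) (pi0 mu0 : 'I_n -> 'I_m -> R) (w : nat -> profile S).
Hypotheses (l_ge0 : forall th w, 0 <= l th w)
  (l_sum1 : forall th, \sum_(w : profile S) l th w = 1)
  (lmarg_gt0 : forall i th (a : S i), 0 < lmarg l i th a)
  (pi0_sum1 : forall i, \sum_(p < m) pi0 i p = 1)
  (mu0_sum1 : forall i, \sum_(p < m) mu0 i p = 1)
  (H3 : forall i th, 0 < pi0 i th /\ 0 < mu0 i th).

Notation lm := (lmarg l).
Notation pit := (pi_b l E pi0 mu0 w).
Notation mut := (mu_b l E pi0 mu0 w).

Lemma lm_sum1 j p : \sum_(a : S j) lm j p a = 1.
Proof.
rewrite -(l_sum1 p) (partition_big (fun x : profile S => x j) predT) //=.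
Qed.

Lemma pitS t : pit t.+1 = pi_step l (w t) (pit t).
Proof. by []. Qed.

Lemma mutS t : mut t.+1 = mu_step E (mut t) (pit t.+1).
Proof. by []. Qed.

Lemma pit0 : pit 0 = pi0. Proof. by []. Qed.
Lemma mut0 : mut 0 = mu0. Proof. by []. Qed.

Lemma pit_facts t : (forall j p, 0 < pit t j p) /\ (forall j, \sum_(p < m) pit t j p = 1).
Proof.
elim: t => [|t [IHp IHs]]; first by split => [j p|j]; [case: (H3 j p)|apply: pi0_sum1].
have Z0 j : 0 < \sum_(p < m) lm j p (w t j) * pit t j p.
  apply: (sum_gt0 (j := thstar)) => [p|]; last by rewrite mulr_gt0.
  by rewrite mulr_ge0 // ltW.
split => [j p|j]; rewrite pitS /pi_step.
  by rewrite divr_gt0 // mulr_gt0.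
by rewrite -mulr_suml divff // gt_eqF.
Qed.

Lemma pit_gt0 t j p : 0 < pit t j p. Proof. by case: (pit_facts t) => H _; apply: H. Qed.
Lemma pit_sum1 t j : \sum_(p < m) pit t j p = 1. Proof. by case: (pit_facts t) => _ H; apply: H. Qed.

Definition Dt t j p := ln (pit t j p) - ln (pit t j thstar).
Definition gl j p (a : S j) := ln (lm j p a) - ln (lm j thstar a).

Lemma DtS t j p : Dt t.+1 j p = Dt t j p + gl p (w t j).
Proof.
rewrite /Dt pitS /pi_step /gl.
have Z0 : 0 < \sum_(p < m) lm j p (w t j) * pit t j p.
  apply: (sum_gt0 (j := thstar)) => [q|]; last by rewrite mulr_gt0 ?pit_gt0.
  by rewrite mulr_ge0 // ltW // pit_gt0.
rewrite !ln_div ?posrE ?mulr_gt0 ?pit_gt0 // !lnM ?posrE ?pit_gt0 //.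
ring.
Qed.

Definition cntj j (a : S j) k : R := \sum_(r < k) (w r j == a)%:R.

Lemma Dt_eq t j p : Dt t j p = Dt 0 j p + \sum_(a : S j) cntj a t * gl p a.
Proof.
elim: t => [|t IH].
  by rewrite big1 ?addr0 // => a _; rewrite /cntj big_ord0 mul0r.
rewrite DtS IH -addrA; congr (_ + _).
rewrite [RHS](eq_bigr (fun a => cntj a t * gl p a + (w t j == a)%:R * gl p a)); last first.
  by move=> a _; rewrite /cntj big_ord_recr /= mulrDl.
rewrite big_split /=; congr (_ + _).
rewrite (bigD1 (w t j)) //= eqxx mul1r big1 ?addr0 // => a.
by rewrite eq_sym => /negbTE ->; rewrite mul0r.
Qed.


Lemma KL_gl j p : KL l j thstar p = - \sum_(a : S j) lm j thstar a * gl p a.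
Proof.
rewrite /KL -sumrN; apply: eq_bigr => a _.
rewrite /gl ln_div ?posrE ?lmarg_gt0 //; ring.
Qed.

Lemma ln_le_sub1 (x : R) : 0 < x -> ln x <= x - 1.
Proof.
move=> x0; have := expR_ge1Dx (ln x); rewrite lnK ?posrE //; lra.
Qed.

Lemma gibbs j p : (0 <= KL l j thstar p) /\ (KL l j thstar p = 0 -> forall a : S j, gl p a = 0).
Proof.
pose x (a : S j) := lm j p a / lm j thstar a.
have x0 a : 0 < x a by rewrite divr_gt0 ?lmarg_gt0.
have glx a : gl p a = ln (x a) by rewrite /gl ln_div ?posrE ?lmarg_gt0.
pose tm (a : S j) := lm j thstar a * (x a - 1 - ln (x a)).
have tm0 a : 0 <= tm a.
  apply: mulr_ge0; first by rewrite ltW ?lmarg_gt0.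
  by have := ln_le_sub1 (x0 a); lra.
have KLE : KL l j thstar p = \sum_a tm a.
  rewrite KL_gl /tm.
  have -> : \sum_a lm j thstar a * (x a - 1 - ln (x a)) =
     \sum_a lm j p a - \sum_a lm j thstar a - \sum_a lm j thstar a * gl p a.
    rewrite -!sumrB; apply: eq_bigr => a _; rewrite glx /x.
    have := lmarg_gt0 thstar a; set u := lm j thstar a => u0.
    by field; rewrite gt_eqF.
  by rewrite !lm_sum1 subrr sub0r.
split; first by rewrite KLE; apply: sumr_ge0 => a _.
move=> K0 a; rewrite KLE in K0.
have := psumr_eq0P (fun a _ => tm0 a) K0 (i := a) isT.
rewrite /tm => /eqP; rewrite mulf_eq0 gt_eqF ?lmarg_gt0 //= subr_eq0 => /eqP hx.
rewrite glx; apply/eqP; apply: contraT => hl.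
have := expR_gt1Dx hl; rewrite lnK ?posrE // -hx; lra.
Qed.


Hypothesis Hfreq : forall j (a : S j) (eps : R), 0 < eps -> exists K, forall k,
  (K <= k)%N -> `|cntj a k - k%:R * lm j thstar a| <= k%:R * eps.

Lemma Dt_bound j p eps : 0 < eps -> exists N, forall t, (N <= t)%N ->
  Dt t j p <= Dt 0 j p - t%:R * (KL l j thstar p - eps).
Proof.
move=> eps0.
set G := \sum_(a : S j) `|gl p a|.
have G0 : 0 <= G by apply: sumr_ge0 => a _.
set e' := eps / (1 + G).
have e'0 : 0 < e' by rewrite divr_gt0 // ltr_pwDl.
have [K HK] := @fin_all_exists _ (fun _ => nat) (fun a K => forall k, (K <= k)%N ->
    `|cntj a k - k%:R * lm j thstar a| <= k%:R * e') (fun a => Hfreq a e'0).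
exists (\sum_(a : S j) K a)%N => t Nt.
rewrite Dt_eq KL_gl.
have -> : \sum_(a : S j) cntj a t * gl p a =
  \sum_(a : S j) (cntj a t - t%:R * lm j thstar a) * gl p a + t%:R * \sum_(a : S j) lm j thstar a * gl p a.
  by rewrite mulr_sumr -big_split /=; apply: eq_bigr => a _; ring.
suff : \sum_(a : S j) (cntj a t - t%:R * lm j thstar a) * gl p a <= t%:R * eps.
  set A := \sum_(a : S j) _; set B := \sum_(a : S j) _ * _; move=> h; lra.
apply: (@le_trans _ _ (\sum_(a : S j) (t%:R * e') * `|gl p a|)).
  apply: ler_sum => a _.
  apply: le_trans (ler_norm _) _; rewrite normrM ler_wpM2r //.
  by apply: HK; apply: leq_trans _ Nt; by rewrite (bigD1 a) //= leq_addr.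
rewrite -mulr_sumr -/G -mulrA ler_wpM2l // /e' mulrAC ler_pdivrMr ?ltr_pwDl //.
by rewrite ler_pM2l // lerDr.
Qed.


Lemma pit_star_lb j : exists2 c, 0 < c & forall t, c <= pit t j thstar.
Proof.
have Hp p : exists N, forall t, (N <= t)%N -> Dt t j p <= Dt 0 j p.
  have [K0 K0z] := gibbs j p.
  have [Kz|Kp] := eqVneq (KL l j thstar p) 0.
    exists 0%N => t _; rewrite Dt_eq big1 ?addr0 // => a _.
    by rewrite (K0z Kz a) mulr0.
  have Kpos : 0 < KL l j thstar p by rewrite lt_def Kp K0.
  have [N HN] := Dt_bound j p Kpos.
  by exists N => t /HN; rewrite subrr mulr0 subr0.
have [N HN] := @fin_all_exists _ (fun _ => nat)
  (fun p N => forall t, (N <= t)%N -> Dt t j p <= Dt 0 j p) Hp.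
have piE t p : pit t j p = pit t j thstar * expR (Dt t j p).
  rewrite /Dt -ln_div ?posrE ?pit_gt0 // lnK ?posrE ?divr_gt0 ?pit_gt0 //.
  by rewrite mulrC divfK // gt_eqF // pit_gt0.
set Z0 := \sum_(p < m) expR (Dt 0 j p).
have Z00 : 0 < Z0 by apply: (sum_gt0 (j := thstar)) => [p|]; rewrite ?expR_ge0 ?expR_gt0.
apply: (@ev_lb _ _ (\sum_(p < m) N p)%N (Z0^-1)); first by rewrite invr_gt0.
- move=> t Nt.
  have H1 : pit t j thstar * \sum_(p < m) expR (Dt t j p) = 1.
    by rewrite mulr_sumr -[RHS](pit_sum1 t j); apply: eq_bigr => p _; rewrite [RHS]piE.
  have HZ : \sum_(p < m) expR (Dt t j p) <= Z0.
    apply: ler_sum => p _; rewrite ler_expR; apply: HN.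
    by apply: leq_trans _ Nt; rewrite (bigD1 p) //= leq_addr.
  have Zt0 : 0 < \sum_(p < m) expR (Dt t j p).
    by apply: (sum_gt0 (j := thstar)) => [p|]; rewrite ?expR_ge0 ?expR_gt0.
  have -> : pit t j thstar = (\sum_(p < m) expR (Dt t j p))^-1.
    by move/(congr1 (fun x => x / \sum_(p < m) expR (Dt t j p))): H1; rewrite mulfK ?gt_eqF // div1r.
  by rewrite lef_pV2 ?posrE.
- by move=> t; apply: pit_gt0.
Qed.


Definition mnb t i p := min_nb E (mut t) (pit t.+1) i p.
Definition Zt t i := \sum_(p < m) mnb t i p.

Lemma mnb_le_pi t i p : mnb t i p <= pit t.+1 i p.
Proof. exact: bigmin_le_init. Qed.

Lemma mnb_le_mu t i j p : E j i -> mnb t i p <= mut t j p.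
Proof. by move=> Eji; apply: bigmin_le => //; rewrite mem_index_enum. Qed.

Lemma mutS_eq t i p : mut t.+1 i p = mnb t i p / Zt t i.
Proof. by []. Qed.

Lemma mut_facts t : (forall i p, 0 < mut t i p) /\ (forall i, \sum_(p < m) mut t i p = 1).
Proof.
elim: t => [|t [IHp IHs]]; first by split => [j p|j]; [case: (H3 j p)|apply: mu0_sum1].
have mnb0 i p : 0 < mnb t i p.
  by apply: lt_bigmin => [|j _]; [apply: pit_gt0|apply: IHp].
have Z0 i : 0 < Zt t i by apply: (sum_gt0 (j := thstar)) => [p|]; rewrite ?ltW.
split => [i p|i]; first by rewrite mutS_eq divr_gt0.
rewrite (eq_bigr (fun p => mnb t i p / Zt t i)); last by move=> p _; rewrite mutS_eq.
rewrite -mulr_suml; change (Zt t i / Zt t i = 1); by rewrite divff // gt_eqF.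
Qed.

Lemma mut_gt0 t i p : 0 < mut t i p. Proof. by case: (mut_facts t) => H _; apply: H. Qed.
Lemma mut_sum1 t i : \sum_(p < m) mut t i p = 1. Proof. by case: (mut_facts t) => _ H; apply: H. Qed.

Lemma mut_le1 t i p : mut t i p <= 1.
Proof.
rewrite -(mut_sum1 t i) (bigD1 p) //= lerDl; apply: sumr_ge0 => q _; exact: ltW (mut_gt0 _ _ _).
Qed.

Lemma mnb_gt0 t i p : 0 < mnb t i p.
Proof. by apply: lt_bigmin => [|j _]; [apply: pit_gt0|apply: mut_gt0]. Qed.

Lemma Zt_le1 t i : Zt t i <= 1.
Proof. by rewrite -(pit_sum1 t.+1 i); apply: ler_sum => p _; apply: mnb_le_pi. Qed.

Lemma Zt_ge t i p : mnb t i p <= Zt t i.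
Proof.
by rewrite /Zt (bigD1 p) //= lerDl; apply: sumr_ge0 => q _; exact: ltW (mnb_gt0 _ _ _).
Qed.

Lemma delta_ex : exists2 dl, 0 < dl & (forall t i, dl <= mut t i thstar) /\ (forall t i, dl <= pit t i thstar).
Proof.
have [c c0 Hc] := fin_all_exists2 pit_star_lb.
set dl := \big[Order.min/1]_(j : 'I_n) Order.min (c j) (mu0 j thstar).
have dle j : dl <= c j /\ dl <= mu0 j thstar.
  have := @bigmin_le _ _ (index_enum 'I_n) predT (fun j => Order.min (c j) (mu0 j thstar)) 1 j.
  rewrite mem_index_enum => /(_ isT isT) h; split; apply: le_trans h _;
    by rewrite ge_min lexx ?orbT.
exists dl.
  apply: lt_bigmin => // j _; rewrite lt_min c0 /=; by case: (H3 j thstar).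
split; last by move=> t i; apply: le_trans (Hc i t); case: (dle i).
elim => [|t IH] i; first by case: (dle i).
rewrite mutS_eq.
have Z0 : 0 < Zt t i by apply: lt_le_trans (mnb_gt0 t i thstar) (Zt_ge _ _ _).
apply: (@le_trans _ _ (mnb t i thstar)).
  apply: le_bigmin => [|j _]; last exact: IH.
  by apply: le_trans (Hc i t.+1); case: (dle i).
rewrite ler_pdivlMr // ler_piMr ?Zt_le1 //; exact: ltW (mnb_gt0 _ _ _).
Qed.

Hypothesis H2 : forall i j : 'I_n, connect E i j.

Section WithDelta.
Variable dl : R.
Hypotheses (dl0 : 0 < dl) (Hdl : forall t i, dl <= mut t i thstar)
  (Hdlp : forall t i, dl <= pit t i thstar).

Lemma mut_step_bound t i p x : mnb t i p <= x -> mut t.+1 i p <= x / dl.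
Proof.
move=> hx; rewrite mutS_eq.
have Z0 : 0 < Zt t i by apply: lt_le_trans (mnb_gt0 t i thstar) (Zt_ge _ _ _).
have dZ : dl <= Zt t i.
  apply: le_trans (Zt_ge t i thstar); apply: le_bigmin => [|j _]; last exact: Hdl.
  exact: Hdlp.
apply: (@le_trans _ _ (mnb t i p / dl)); last by rewrite ler_pM2r ?invr_gt0.
by rewrite ler_pM2l ?mnb_gt0 // lef_pV2 ?posrE.
Qed.

Lemma mut_edge t i j p : E j i -> mut t.+1 i p <= mut t j p / dl.
Proof. by move=> Eji; apply: mut_step_bound; apply: mnb_le_mu. Qed.

Lemma mut_pi t i p : mut t.+1 i p <= pit t.+1 i p / dl.
Proof. by apply: mut_step_bound; apply: mnb_le_pi. Qed.

Lemma path_bound th (p : seq 'I_n) : forall x t, path E x p ->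
  mut (t + size p) (last x p) th <= mut t x th / dl ^+ size p.
Proof.
elim: p => [|y p IH] x t /=; first by rewrite addn0 expr0 divr1.
move=> /andP[Exy pth]; rewrite addnS -addSn.
apply: le_trans (IH y t.+1 pth) _.
rewrite exprS invfM mulrA ler_pM2r ?invr_gt0 ?exprn_gt0 //.
exact: mut_edge.
Qed.

Lemma pit_le1 t j p : pit t j p <= 1.
Proof.
rewrite -(pit_sum1 t j) (bigD1 p) //= lerDl; apply: sumr_ge0 => q _; exact: ltW (pit_gt0 _ _ _).
Qed.

Lemma rate i th v eps : 0 < eps -> exists C, exists N, forall T, (N <= T)%N ->
  ln (mut T i th) <= C - T%:R * (KL l v thstar th - eps).
Proof.
move=> eps0.
have [p pth ip] := connectP (H2 v i).
set d := size p.
have [N1 HN1] := Dt_bound v th eps0.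
set K := KL l v thstar th.
exists (Dt 0 v th + d%:R * (K - eps) - (d.+1)%:R * ln dl), (N1 + d).+1 => T hT.
have [t' Te] : exists t', T = (t'.+1 + d)%N by exists (T - d.+1)%N; lia.
have N1t : (N1 <= t'.+1)%N by lia.
rewrite Te ip.
have h1 := path_bound th t'.+1 pth.
have h2 := mut_pi t' v th.
have hm : mut (t'.+1 + d) (last v p) th <= pit t'.+1 v th / dl ^+ d.+1.
  apply: le_trans h1 _; rewrite exprS invfM mulrA ler_pM2r ?invr_gt0 ?exprn_gt0 //.
have m0 := mut_gt0 (t'.+1 + d) (last v p) th.
have pg0 := pit_gt0 t'.+1 v th.
apply: le_trans (_ : ln (pit t'.+1 v th / dl ^+ d.+1) <= _).
  by rewrite ler_ln // posrE divr_gt0 // exprn_gt0.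
rewrite ln_div ?posrE ?exprn_gt0 // lnXn // -mulr_natl.
have hD := HN1 _ N1t.
have hs : ln (pit t'.+1 v th) <= Dt t'.+1 v th.
  by rewrite /Dt; have := ln_le0 (pit_le1 t'.+1 v thstar); lra.
rewrite natrD.
move: hD hs; rewrite -/K; set a := ln _; set b := Dt _ _ _; set c := Dt _ _ _; set q := ln dl.
move=> hD hs.
have : (t'.+1)%:R * (K - eps) = (t'.+1)%:R * K - (t'.+1)%:R * eps by ring.
nra.
Qed.

End WithDelta.

Lemma rate' i th v eps : 0 < eps -> exists C, exists N, forall T, (N <= T)%N ->
  ln (mut T i th) <= C - T%:R * (KL l v thstar th - eps).
Proof. by have [dl dl0 [Hm Hp]] := delta_ex; apply: (rate dl0 Hm Hp). Qed.

Lemma ev_small i th v e : 0 < KL l v thstar th -> 0 < e ->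
  exists N, forall T, (N <= T)%N -> mut T i th <= e.
Proof.
move=> K0 e0; set K := KL l v thstar th in K0 *.
have [C [N HN]] := rate' i th v (eps := K / 2) (divr_gt0 K0 (ltr0Sn _ 1)).
set y := (C - ln e) / (K / 2).
exists (maxn N (Num.truncn y).+1) => T hT.
have hT1 : (N <= T)%N by apply: leq_trans hT; apply: leq_maxl.
have hT2 : y < T%:R.
  apply: lt_le_trans (truncnS_gt y) _; rewrite ler_nat; apply: leq_trans hT; apply: leq_maxr.
have h := HN T hT1.
rewrite -(ler_ln (mut_gt0 _ _ _)) ?posrE //.
apply: le_trans h _.
have K20 : 0 < K / 2 by rewrite divr_gt0.
have : (C - ln e) < T%:R * (K / 2) by rewrite -ltr_pdivrMr // -/y mulrC.
have -> : K - K / 2 = K / 2 by field.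
lra.
Qed.

Hypothesis H1 : forall p q : 'I_m, p != q -> exists i, informative l p q i.

Lemma ev_near (Q : nat -> Prop) : (exists N, forall T, (N <= T)%N -> Q T) ->
  \forall T \near \oo, Q T.
Proof. by move=> [N HN]; exists N => // T; apply: HN. Qed.

Lemma conv1 i : (fun t => mut t i thstar) @ \oo --> (1 : R).
Proof.
apply/cvgrPdist_le => e e0.
have m0 : (0 < m)%N by case: (m) thstar => [[]|].
have em0 : 0 < e / m%:R by rewrite divr_gt0 // ltr0n.
have Hp p : exists N, p != thstar -> forall T, (N <= T)%N -> mut T i p <= e / m%:R.
  have [->|pn] := eqVneq p thstar; first by exists 0%N.
  have [v Hv] : exists v, informative l thstar p v by apply: H1; rewrite eq_sym.
  have [N HN] := ev_small i Hv em0.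
  by exists N => _.
have [N HN] := @fin_all_exists _ (fun _ => nat)
  (fun p N => p != thstar -> forall T, (N <= T)%N -> mut T i p <= e / m%:R) Hp.
apply: ev_near; exists (\sum_(p < m) N p)%N => T hT.
have Hs : 1 - mut T i thstar = \sum_(p < m | p != thstar) mut T i p.
  by rewrite -(mut_sum1 T i) (bigD1 thstar) //= addrC addrK.
rewrite ger0_norm; last by rewrite subr_ge0 mut_le1.
rewrite Hs; apply: (@le_trans _ _ (\sum_(p < m | p != thstar) e / m%:R)).
  apply: ler_sum => p pn; apply: HN => //; apply: leq_trans hT.
  by rewrite (bigD1 p) //= leq_addr.
apply: (@le_trans _ _ (\sum_(p < m) e / m%:R)).
  by rewrite [leRHS](bigD1 thstar) //= lerDr ltW.
by rewrite sumr_const card_ord -(mulr_natr (e / m%:R) m) divfK // pnatr_eq0 -lt0n.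
Qed.

Lemma liminf_ge (u : nat -> R) (a : R) :
  (forall eps, 0 < eps -> exists N, forall T, (N <= T)%N -> a - eps <= u T) ->
  (a%:E <= limn_einf (fun T => (u T)%:E))%E.
Proof.
move=> H; apply/lee_addgt0Pr => e e0.
have [N HN] := H e e0.
have : ((a - e)%:E <= limn_einf (fun T => (u T)%:E))%E.
  rewrite limn_einf_lim; apply: lime_ge; first exact: is_cvg_einfs.
  apply: ev_near; exists N => k kN.
  apply: le_ereal_inf_tmp => _ [j /= kj <-]; rewrite lee_fin; apply: HN.
  exact: leq_trans kN kj.
by rewrite EFinB leeBlDr.
Qed.

Lemma conv2 i th :
  ((\big[Num.max/0]_(v | informative l thstar th v) KL l v thstar th)%:E
   <= limn_einf (fun t : nat => ((- ln (mut t i th)) / t%:R)%:E))%E.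
Proof.
apply: liminf_ge.
have u0 T : 0 <= (- ln (mut T i th)) / T%:R.
  by rewrite mulr_ge0 // ?invr_ge0 // oppr_ge0 ln_le0 // mut_le1.
elim/big_ind: _.
- move=> eps e0; exists 0%N => T _; have := u0 T; lra.
- move=> x y Hx Hy eps e0.
  have [N1 HN1] := Hx eps e0; have [N2 HN2] := Hy eps e0.
  exists (maxn N1 N2) => T hT; rewrite lerBlDr ge_max -!lerBlDr.
  by rewrite HN1 ?HN2 //; apply: leq_trans hT; rewrite ?leq_maxl ?leq_maxr.
move=> v _ eps e0.
have e20 : 0 < eps / 2 by rewrite divr_gt0.
have [C [N HN]] := rate' i th v e20.
set K := KL l v thstar th in HN *.
set y := C / (eps / 2).
exists (maxn N (Num.truncn y).+1) => T hT.
have hT1 : (N <= T)%N by apply: leq_trans hT; apply: leq_maxl.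
have hT2 : y < T%:R.
  apply: lt_le_trans (truncnS_gt y) _; rewrite ler_nat; apply: leq_trans hT; apply: leq_maxr.
have T0 : 0 < T%:R :> R.
  rewrite ltr0n; apply: leq_trans hT; rewrite leq_max orbC //.
have h := HN T hT1.
rewrite ler_pdivlMr //.
have : C < T%:R * (eps / 2) by rewrite -ltr_pdivrMr // -/y mulrC.
set L := ln _ in h *.
move: h; set Tr := T%:R; move=> h h2.
have e1 : Tr * (K - eps / 2) = (K - eps) * Tr + Tr * (eps / 2) by field.
lra.
Qed.

End Det.

Theorem corollary1
  (R : realType) (n m : nat) (S : 'I_n -> finType)
  (l : 'I_m -> profile S -> R) (thstar : 'I_m)
  (E : rel 'I_n) (pi0 mu0 : 'I_n -> 'I_m -> R)
  (d : measure_display) (Omega : measurableType d) (P : probability Omega R)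
  (s : nat -> Omega -> profile S)
  (* l(.|theta) is a probability distribution on profiles *)
  (l_ge0 : forall th w, 0 <= l th w)
  (l_sum1 : forall th, \sum_(w : profile S) l th w = 1)
  (* positive marginal likelihoods *)
  (lmarg_gt0 : forall i th (a : S i), 0 < lmarg l i th a)
  (* s k is the signal profile s_{k+1}; profiles are i.i.d. with law l(.|theta_star) *)
  (s_meas : forall k w, measurable [set om | s k om = w])
  (s_iid : forall (N : nat) (ws : nat -> profile S),
      P [set om | forall k, (k < N)%N -> s k om = ws k]
      = (\prod_(k < N) l thstar (ws k))%:E)
  (* initial beliefs are probability vectors *)
  (pi0_sum1 : forall i, \sum_(p < m) pi0 i p = 1)
  (mu0_sum1 : forall i, \sum_(p < m) mu0 i p = 1)
  (* (i) global identifiability *)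
  (H1 : forall p q : 'I_m, p != q -> exists i, informative l p q i)
  (* (ii) strong connectivity *)
  (H2 : forall i j : 'I_n, connect E i j)
  (* (iii) positive priors *)
  (H3 : forall i th, 0 < pi0 i th /\ 0 < mu0 i th) :
  (forall i : 'I_n,
     {ae P, forall om,
        ((fun t : nat => mu_b l E pi0 mu0 (s ^~ om) t i thstar) @ \oo --> (1 : R))}) /\
  (forall (i : 'I_n) (th : 'I_m), th != thstar ->
     {ae P, forall om,
        ((\big[Num.max/0]_(v | informative l thstar th v) KL l v thstar th)%:E
         <= limn_einf (fun t : nat =>
              ((- ln (mu_b l E pi0 mu0 (s ^~ om) t i th)) / t%:R)%:E))%E}).
Proof.
have [w0 _] : exists w0 : profile S, True.
  case: (pickP (fun _ : profile S => true)) => [w0 _|H]; first by exists w0.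
  have := l_sum1 thstar; rewrite big1 => [/eqP|w]; last by have := H w.
  by rewrite eq_sym oner_eq0.
have Hae : {ae P, forall om, forall j (a : S j) (eps : R), 0 < eps -> exists K, forall k,
  (K <= k)%N -> `|cntj R (s ^~ om) a k - k%:R * lmarg l j thstar a| <= k%:R * eps}.
  apply: filter_forall => j; apply: filter_forall => a.
  have := slln (l_ge0 thstar) (l_sum1 thstar) s_meas s_iid w0 (fun x => x j == a).
  by apply: filterS => om Hom eps e0; apply: Hom.
split.
- move=> i; apply: filterS Hae => om Hom.
  by apply: conv1 => //.
- move=> i th _; apply: filterS Hae => om Hom.
  by apply: conv2 => //.
Qed.
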